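(* There do not exist real numbers $a,b,c$ with $a\neq 0$ such that the quadratic function $f(x)=ax^2+bx+c$ has two distinct fixed points $p_1,p_2\in\mathbb{R}$ with the property that for each $i\in\{1,2\}$ there is $\epsilon_i>0$ such that for every $x^{(0)}$ with $|x^{(0)}-p_i|\le\epsilon_i$, the fixed-point iteration $x^{(t)}=f(x^{(t-1)})$, $t\ge1$, converges to $p_i$.
   Context: A fixed point of $f$ is a point $p$ with $f(p)=p$. *)

(* Defs.v *)
From Stdlib Require Import Reals.
Open Scope R_scope.

Definition quad (a b c : R) (x : R) : R := a * x ^ 2 + b * x + c.

Fixpoint fp_iter (f : R -> R) (x0 : R) (t : nat) : R :=
  match t with
  | O => x0
  | S t' => f (fp_iter f x0 t')
  end.

Definition is_fixed_point (f : R -> R) (p : R) : Prop := f p = p.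

Definition locally_attracting (f : R -> R) (p : R) : Prop :=
  exists eps : R, 0 < eps /\
    forall x0 : R, Rabs (x0 - p) <= eps -> Un_cv (fp_iter f x0) p.

(* Main.v *)
Require Import Defs.
From Stdlib Require Import Reals Lra Psatz.
Open Scope R_scope.

Lemma inv_step a b c p y0 x0 : quad a b c p = p -> 2*a*p+b >= 1 -> 0 < a*y0 ->
  x0 = p + y0 ->
  forall n, a * (fp_iter (quad a b c) x0 n - p) >= a*y0.
Proof.
  intros Hf Hl Hy Hx n; induction n as [|n IH]; simpl.
  - subst; lra.
  - set (u := fp_iter (quad a b c) x0 n) in *.
    unfold quad in *.
    assert (E : a * (a * u ^ 2 + b * u + c - p) =
                (a*(u-p)) * ((2*a*p+b) + a*(u-p))) by (simpl; nra).
    rewrite E. nra.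
Qed.

Lemma not_attr a b c p : a <> 0 -> quad a b c p = p -> 2*a*p+b >= 1 ->
  ~ locally_attracting (quad a b c) p.
Proof.
  intros Ha Hf Hl [eps [He H]].
  assert (Hy : exists y0, 0 < a*y0 /\ Rabs y0 = eps).
  { destruct (Rlt_or_le 0 a).
    - exists eps; split; [nra|]; apply Rabs_right; lra.
    - exists (-eps); split; [assert (a<0) by (destruct H0; [lra|congruence]); nra|].
      rewrite Rabs_Ropp; apply Rabs_right; lra. }
  destruct Hy as [y0 [Hy Hy0]].
  specialize (H (p + y0)).
  assert (Hr : Rabs (p + y0 - p) <= eps) by (replace (p+y0-p) with y0 by ring; lra).
  specialize (H Hr eps He). destruct H as [N HN].
  specialize (HN N (le_n N)). unfold R_dist in HN.
  pose proof (inv_step a b c p y0 (p+y0) Hf Hl Hy eq_refl N) as Hi.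
  set (z := fp_iter (quad a b c) (p + y0) N - p) in *.
  rewrite <- Hy0 in HN.
  destruct (Rcase_abs z) as [Hz|Hz]; [rewrite (Rabs_left z) in HN by lra|rewrite (Rabs_right z) in HN by lra];
  (destruct (Rcase_abs y0) as [Hw|Hw]; [rewrite (Rabs_left y0) in HN by lra|rewrite (Rabs_right y0) in HN by lra]);
  nra.
Qed.

Theorem lemmaA8 :
  ~ (exists a b c p1 p2 : R,
        a <> 0 /\ p1 <> p2 /\
        is_fixed_point (quad a b c) p1 /\ is_fixed_point (quad a b c) p2 /\
        locally_attracting (quad a b c) p1 /\
        locally_attracting (quad a b c) p2).
Proof.
  intros [a [b [c [p1 [p2 [Ha [Hp [F1 [F2 [A1 A2]]]]]]]]]].
  unfold is_fixed_point in *.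
  assert (Hs : (2*a*p1+b) + (2*a*p2+b) = 2).
  { unfold quad in F1, F2.
    assert (E : (p1 - p2) * (a*(p1+p2) + b - 1) = 0) by (simpl in *; nra).
    apply Rmult_integral in E. destruct E as [E|E]; [exfalso; apply Hp; lra | nra]. }
  destruct (Rle_or_lt 1 (2*a*p1+b)).
  - apply (not_attr a b c p1); auto; lra.
  - apply (not_attr a b c p2); auto; lra.
Qed.
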